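(* In the setting below, let $A$ be a type over $\Gamma$ and $B$ a type over $\Gamma.A$. If there are global elements $\mathbf{c}_A:\Phi(\Gamma,A)$ and $\mathbf{c}_B:\Phi(\Gamma.A,B)$, then there is a global element $\mathbf{c}:\Phi(\Gamma,\Pi(x:A).B)$.
   Context: Work in the internal extensional dependent type theory of a presheaf topos containing an object $\mathbb{I}$ which is internally a De Morgan algebra $(0,1,\wedge,\vee,1-\cdot)$ with $0\neq1$ and the disjunction property $i\vee j=1\Rightarrow(i=1\vee j=1)$. $\Omega$ is the type of propositions. $\mathbb{F}=\{p:\Omega\mid\exists i:\mathbb{I}.\ p=(i=1)\}$. For $\phi:\mathbb{F}$, $[\phi]$ is the subsingleton type $\mathrm{Id}_{\mathbb{F}}(\phi,\top)$. For a type $A$ and partial element $u:[\phi]\to A$, $A[\phi\mapsto u]=\Sigma(a:A).([\phi]\to\mathrm{Id}_A(a,u))$. Contexts $\Gamma$ are treated as closed types, $\Gamma.A=\Sigma(\gamma:\Gamma).A(\gamma)$, and for $\gamma:\mathbb{I}\to\Gamma$, $A(\gamma(i))$ denotes reindexing. The type of compositions is $\Phi(\Gamma,A)=\Pi(\gamma:\mathbb{I}\to\Gamma)(\phi:\mathbb{F})(u:\Pi(i:\mathbb{I}).[\phi]\to A(\gamma(i))).\ A(\gamma(0))[\phi\mapsto u(0)]\to A(\gamma(1))[\phi\mapsto u(1)]$. *)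

(* Defs.v *)
(* The internal extensional type theory of the presheaf topos is
   modelled by Rocq's own type theory (with propext for Omega). *)
From Stdlib Require Import PropExtensionality.

Record Interval : Type := {
  I :> Type;
  i0 : I;
  i1 : I;
  imeet : I -> I -> I;
  ijoin : I -> I -> I;
  irev : I -> I;
  meet_assoc : forall x y z, imeet x (imeet y z) = imeet (imeet x y) z;
  join_assoc : forall x y z, ijoin x (ijoin y z) = ijoin (ijoin x y) z;
  meet_comm : forall x y, imeet x y = imeet y x;
  join_comm : forall x y, ijoin x y = ijoin y x;
  meet_absorb : forall x y, imeet x (ijoin x y) = x;
  join_absorb : forall x y, ijoin x (imeet x y) = x;
  meet_distr : forall x y z, imeet x (ijoin y z) = ijoin (imeet x y) (imeet x z);
  join_zero : forall x, ijoin x i0 = x;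
  meet_one : forall x, imeet x i1 = x;
  rev_invol : forall x, irev (irev x) = x;
  rev_meet : forall x y, irev (imeet x y) = ijoin (irev x) (irev y);
  zero_neq_one : i0 <> i1;
  disj_prop : forall x y, ijoin x y = i1 -> x = i1 \/ y = i1
}.

Definition Cof (D : Interval) : Type := { p : Prop | exists i : I D, p = (i = i1 D) }.

Lemma cofTop_proof (D : Interval) : exists i : I D, True = (i = i1 D).
Proof. exists (i1 D). apply propositional_extensionality; split; auto. Qed.

Definition cofTop (D : Interval) : Cof D := exist _ True (cofTop_proof D).

Definition holds {D : Interval} (phi : Cof D) : Prop := phi = cofTop D.

Definition Ext {D : Interval} (A : Type) (phi : Cof D) (u : holds phi -> A) : Type :=
  { a : A | forall h : holds phi, a = u h }.

Definition Comp (D : Interval) (Gamma : Type) (A : Gamma -> Type) : Type :=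
  forall (gamma : I D -> Gamma) (phi : Cof D)
         (u : forall i : I D, holds phi -> A (gamma i)),
    Ext (A (gamma (i0 D))) phi (u (i0 D)) -> Ext (A (gamma (i1 D))) phi (u (i1 D)).

(* Main.v *)
Require Import Defs.
From Stdlib Require Import PropExtensionality ProofIrrelevance FunctionalExtensionality.

Section Alg.
Variable D : Interval.
Lemma one_join (x : I D) : ijoin D (i1 D) x = i1 D.
Proof.
  pose proof (join_absorb D (i1 D) x) as H.
  rewrite (meet_comm D (i1 D) x), meet_one in H. exact H.
Qed.
Lemma rev1 : irev D (i1 D) = i0 D.
Proof.
  pose proof (rev_meet D (irev D (i0 D)) (i1 D)) as H.
  rewrite meet_one, rev_invol, join_comm, join_zero in H. symmetry; exact H.
Qed.
Lemma rev0 : irev D (i0 D) = i1 D.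
Proof. rewrite <- rev1, rev_invol. reflexivity. Qed.
End Alg.

Lemma rew_irr {X : Type} (P : X -> Type) (x y : X) (p q : x = y) (a : P x) :
  eq_rect x P a y p = eq_rect x P a y q.
Proof. rewrite (proof_irrelevance _ p q). reflexivity. Qed.

Lemma rew_loop {X : Type} (P : X -> Type) (x : X) (p : x = x) (a : P x) :
  eq_rect x P a x p = a.
Proof. rewrite (proof_irrelevance _ p eq_refl). reflexivity. Qed.

Lemma rew_trans {X : Type} (P : X -> Type) (x y z : X) (p : x = y) (q : y = z) (a : P x) :
  eq_rect y P (eq_rect x P a y p) z q = eq_rect x P a z (eq_trans p q).
Proof. destruct q; destruct p; reflexivity. Qed.

Definition cofEq (D : Interval) (i : I D) : Cof D :=
  exist _ (i = i1 D) (ex_intro _ i eq_refl).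

Lemma cofEq_holds (D : Interval) (i : I D) : holds (cofEq D i) -> i = i1 D.
Proof.
  intro H. pose proof (f_equal (@proj1_sig _ _) H) as H'. simpl in H'.
  rewrite H'. exact Logic.I.
Qed.

Lemma cofEq_one (D : Interval) : holds (cofEq D (i1 D)).
Proof.
  unfold holds, cofEq, cofTop.
  assert (E : (i1 D = i1 D) = True)
    by (apply propositional_extensionality; split; auto).
  apply eq_sig_hprop.
  - intros; apply proof_irrelevance.
  - exact E.
Qed.

Theorem mainTheorem17 (D : Interval) (Gamma : Type) (A : Gamma -> Type)
    (B : {g : Gamma & A g} -> Type)
    (cA : Comp D Gamma A) (cB : Comp D {g : Gamma & A g} B) :
  Comp D Gamma (fun g => forall x : A g, B (existT _ g x)).
Proof.
  intros gamma phi u u0.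
  assert (K : forall a1 : A (gamma (i1 D)),
     {b : B (existT _ (gamma (i1 D)) a1) | forall h, b = u (i1 D) h a1}).
  2:{ exists (fun x => proj1_sig (K x)). intro h.
      apply functional_extensionality_dep. intro x.
      exact (proj2_sig (K x) h). }
  intro a1.
  set (AG := fun k => A (gamma k)).
  (* backward filler *)
  assert (Pj : forall i j : I D, holds (cofEq D i) -> i1 D = ijoin D i (irev D j)).
  { intros i j h. rewrite (cofEq_holds D i h). symmetry; apply one_join. }
  assert (P0 : forall i : I D, i1 D = ijoin D i (irev D (i0 D))).
  { intro i. rewrite rev0, join_comm, one_join. reflexivity. }
  assert (Ei : forall i : I D, ijoin D i (irev D (i1 D)) = i).
  { intro i. rewrite rev1, join_zero. reflexivity. }
  pose (fillv := fun i : I D =>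
    proj1_sig (cA (fun j => gamma (ijoin D i (irev D j))) (cofEq D i)
      (fun j h => eq_rect (i1 D) AG a1 _ (Pj i j h))
      (exist (fun x : AG (ijoin D i (irev D (i0 D))) => forall h : holds (cofEq D i), x = eq_rect (i1 D) AG a1 _ (Pj i (i0 D) h)) (eq_rect (i1 D) AG a1 _ (P0 i))
         (fun h => rew_irr AG _ _ (P0 i) (Pj i (i0 D) h) a1)))).
  pose (a := fun i : I D => eq_rect _ AG (fillv i) i (Ei i)).
  assert (Ha1 : a (i1 D) = a1).
  { unfold a, fillv.
    destruct (cA _ _ _ _) as [v Hv]. simpl.
    rewrite (Hv (cofEq_one D)). rewrite rew_trans. apply rew_loop. }
  destruct (cB (fun j => existT _ (gamma j) (a j)) phi
              (fun j h => u j h (a j))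
              (exist (fun x => forall h : holds phi, x = u (i0 D) h (a (i0 D))) (proj1_sig u0 (a (i0 D)))
                 (fun h => match proj2_sig u0 h in _ = g return proj1_sig u0 (a (i0 D)) = g (a (i0 D)) with eq_refl => eq_refl end)))
    as [b' Hb'].
  simpl in b', Hb'.
  exists (eq_rect _ (fun x => B (existT _ (gamma (i1 D)) x)) b' _ Ha1).
  intro h. rewrite (Hb' h). clear Hb' b'. destruct Ha1. reflexivity.
Qed.
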